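(* Let $n>2$ and $r=n$. The depth-two claw $G_n$ with $n$ leaves is not $r$-EKR.
   Context: A depth-two claw with $n$ leaves, $G_n$, is the tree with a root $c$ adjacent to vertices $b_1,\dots,b_n$, where each $b_i$ is adjacent to exactly one further vertex $a_i$. An $r$-independent set is an independent set of size $r$. A family of sets is intersecting if every two members meet. A canonically intersecting family is the family of all $r$-independent sets containing a fixed vertex. A graph is $r$-EKR if the maximum size of an intersecting family of $r$-independent sets equals the maximum size of a canonically intersecting family. *)

(* Defs.v *)
From mathcomp Require Import all_boot.
Set Implicit Arguments. Unset Strict Implicit. Unset Printing Implicit Defensive.

(* A simple graph is given by a vertex finType T and a symmetric irreflexive
   adjacency relation e : rel T. *)
Section EKR.
Variables (T : finType) (e : rel T).

Definition independent (A : {set T}) : bool :=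
  [forall x in A, forall y in A, ~~ e x y].

Definition r_independent (r : nat) (A : {set T}) : bool :=
  independent A && (#|A| == r).

Definition intersecting (F : {set {set T}}) : bool :=
  [forall A in F, forall B in F, A :&: B != set0].

Definition family_of_r_indep (r : nat) (F : {set {set T}}) : bool :=
  [forall A in F, r_independent r A].

Definition star (r : nat) (v : T) : {set {set T}} :=
  [set A | r_independent r A & v \in A].

Definition max_intersecting (r : nat) : nat :=
  \max_(F : {set {set T}} | family_of_r_indep r F && intersecting F) #|F|.

Definition max_star (r : nat) : nat := \max_(v : T) #|star r v|.

Definition r_EKR (r : nat) : Prop := max_intersecting r = max_star r.
End EKR.

(* Depth-two claw G_n: vertices c (inl tt), b_i (inr (inl i)), a_i (inr (inr i)). *)
Definition claw_vertex (n : nat) : finType := (unit + ('I_n + 'I_n))%type.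

Definition claw_root {n : nat} : claw_vertex n := inl tt.
Definition claw_b {n : nat} (i : 'I_n) : claw_vertex n := inr (inl i).
Definition claw_a {n : nat} (i : 'I_n) : claw_vertex n := inr (inr i).

Definition claw_arc (n : nat) (x y : claw_vertex n) : bool :=
  match x, y with
  | inl _, inr (inl _) => true
  | inr (inl i), inr (inr j) => i == j
  | _, _ => false
  end.

Definition claw_adj (n : nat) : rel (claw_vertex n) :=
  fun x y => claw_arc x y || claw_arc y x.

(* Main.v *)
Require Import Defs.
From mathcomp Require Import all_boot zify.
Set Implicit Arguments. Unset Strict Implicit. Unset Printing Implicit Defensive.

Section S.
Variable n : nat.
Notation V := (claw_vertex n).

Definition tr (f : {ffun 'I_n -> bool}) : {set V} :=
  [set x : V | match x with inl _ => false | inr (inl i) => ~~ f i | inr (inr i) => f i end].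
Definition cs (j : 'I_n) : {set V} :=
  [set x : V | match x with inl _ => true | inr (inl _) => false | inr (inr k) => k != j end].

Lemma card_tr f : #|tr f| = n.
Proof.
have -> : tr f = [set (if f i then claw_a i else claw_b i) | i : 'I_n].
  apply/setP => x; rewrite !inE.
  case: x => [[]|[i|i]] /=.
  - by apply/esym/imsetP => -[k _]; case: (f k).
  - apply/idP/imsetP => [h|[k _]].
      by exists i => //; rewrite (negbTE h).
    by case E: (f k) => // -[->]; rewrite E.
  - apply/idP/imsetP => [h|[k _]].
      by exists i => //; rewrite h.
    by case E: (f k) => // -[->]; rewrite E.
rewrite card_imset ?card_ord // => i j.
by case: (f i); case: (f j) => -[].
Qed.

Lemma card_cs j : #|cs j| = n.
Proof.
have -> : cs j = claw_root |: [set claw_a k | k in [set~ j]].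
  apply/setP => x; rewrite !inE.
  case: x => [[]|[i|i]] /=.
  - by [].
  - by apply/esym/imsetP => -[k _].
  - apply/idP/imsetP => [h|[k]].
      by exists i => //; rewrite !inE.
    by rewrite !inE => hk [->].
rewrite cardsU1 card_imset; last by move=> a b [].
rewrite cardsC1 card_ord.
have -> : (claw_root \notin [set claw_a k | k in [set~ j]]) = true.
  by apply/negP => /imsetP [k].
by case: n j => [[]|m].
Qed.
Lemma indepP (A : {set V}) x y : independent (@claw_adj n) A -> x \in A -> y \in A -> ~~ claw_adj x y.
Proof. by move/forallP/(_ x)/implyP => H hx; move: (H hx) => /forallP/(_ y)/implyP. Qed.

Lemma indep_intro (A : {set V}) : (forall x y, x \in A -> y \in A -> ~~ claw_adj x y) -> independent (@claw_adj n) A.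
Proof. by move=> H; apply/forallP => x; apply/implyP => hx; apply/forallP => y; apply/implyP; apply: H. Qed.

Lemma tr_indep f : r_independent (@claw_adj n) n (tr f).
Proof.
rewrite /r_independent card_tr eqxx andbT; apply: indep_intro.
move=> [[]|[i|i]] [[]|[j|j]]; rewrite !inE /claw_adj /= //.
- move=> hi hj; rewrite orbF; apply/eqP => eij; subst j; by rewrite hj in hi.
- move=> hi hj; apply/eqP => eij; subst j; by rewrite hi in hj.
Qed.

Lemma cs_indep j : r_independent (@claw_adj n) n (cs j).
Proof.
rewrite /r_independent card_cs eqxx andbT; apply: indep_intro.
by move=> [[]|[i|i]] [[]|[k|k]]; rewrite !inE /claw_adj /= //.
Qed.

Lemma indep_char (A : {set V}) : r_independent (@claw_adj n) n A ->
  (exists f, A = tr f) \/ (exists j, A = cs j).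
Proof.
case/andP => hI /eqP hc.
case: (boolP (claw_root \in A)) => hr.
  have hb : forall i, claw_b i \notin A.
    by move=> i; apply/negP => hi; move: (indepP hI hr hi); rewrite /claw_adj.
  case: (pickP (fun j => claw_a j \notin A)) => [j hj | hall].
    right; exists j; apply/eqP; rewrite eqEcard card_cs hc leqnn andbT.
    apply/subsetP => -[[]|[i|i]] hx; rewrite inE //.
    - by rewrite (negbTE (hb i)) in hx.
    - by apply/eqP => eij; subst i; rewrite hx in hj.
  exfalso.
  have hs : claw_root |: [set claw_a k | k : 'I_n] \subset A.
    apply/subsetP => x; rewrite !inE => /orP [/eqP -> // | /imsetP [k _ ->]].
    by move: (hall k) => /= /negbFE.
  move: (subset_leq_card hs); rewrite cardsU1 card_imset; last by move=> a b [].
  rewrite card_ord hc.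
  have -> : (claw_root \notin [set claw_a k | k : 'I_n]) = true.
    by apply/negP => /imsetP [k].
  by rewrite ltnn.
left; exists [ffun i => claw_a i \in A]; apply/eqP; rewrite eqEcard card_tr hc leqnn andbT.
apply/subsetP => -[[]|[i|i]] hx; rewrite inE ?ffunE //.
- by rewrite hx in hr.
- by apply/negP => hi; move: (indepP hI hx hi); rewrite /claw_adj /= eqxx.
Qed.
Definition negf (f : {ffun 'I_n -> bool}) : {ffun 'I_n -> bool} := [ffun i => ~~ f i].

Lemma half (P : {ffun 'I_n -> bool} -> bool) : (forall f, P (negf f) = ~~ P f) ->
  #|[set f | P f]|.*2 = 2 ^ n.
Proof.
move=> HP.
have nK : cancel negf negf by move=> f; apply/ffunP => i; rewrite !ffunE negbK.
have e : ~: [set f | P f] = negf @: [set f | P f].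
  apply/setP => f; rewrite !inE; apply/idP/imsetP => [h|[g hg ->]].
    by exists (negf f); rewrite ?inE ?HP ?h // nK.
  by rewrite HP negbK -(in_set (fun f => P f)).
have := cardsC [set f | P f].
rewrite e card_imset; last exact: can_inj nK.
by rewrite card_ffun card_bool card_ord addnn.
Qed.

Lemma meet (A B : {set V}) x : x \in A -> x \in B -> A :&: B != set0.
Proof. by move=> ha hb; apply/set0Pn; exists x; rewrite inE ha hb. Qed.

Lemma star_bound v : #|star (@claw_adj n) n v| <=
  #|[set f | v \in tr f]| + #|[set j | v \in cs j]|.
Proof.
apply: leq_trans (subset_leq_card (_ : star _ _ v \subset tr @: [set f | v \in tr f] :|: cs @: [set j | v \in cs j])) _.
  apply/subsetP => X; rewrite inE => /andP [hI hv].
  case: (indep_char hI) => [[f e]|[j e]]; subst X; rewrite inE; apply/orP; [left|right].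
    by apply/imsetP; exists f => //; rewrite in_set.
  by apply/imsetP; exists j => //; rewrite in_set.
apply: leq_trans (leq_card_setU _ _) _.
by apply: leq_add; apply: leq_imset_card.
Qed.
End S.

Theorem proposition9p4 (n : nat) : 2 < n -> ~ r_EKR (@claw_adj n) n.
Proof.
move=> hn.
pose i0 : 'I_n := Ordinal (ltnW (ltnW hn)).
pose i1 : 'I_n := Ordinal (ltnW hn).
pose i2 : 'I_n := Ordinal hn.
pose maj (f : {ffun 'I_n -> bool}) := [|| f i0 && f i1, f i0 && f i2 | f i1 && f i2].
have majN : forall f, maj (negf f) = ~~ maj f.
  by move=> f; rewrite /maj !ffunE; case: (f i0); case: (f i1); case: (f i2).
set H := #|[set f | maj f]|.
have hH : H.*2 = 2 ^ n by apply: half.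
have hF : forall i : 'I_n, #|[set f : {ffun 'I_n -> bool} | f i]| = H.
  by move=> i; apply: double_inj; rewrite hH half // => f; rewrite ffunE.
have hFn : forall i : 'I_n, #|[set f : {ffun 'I_n -> bool} | ~~ f i]| = H.
  by move=> i; apply: double_inj; rewrite hH half // => f; rewrite ffunE.
have Hpos : 0 < H by rewrite -double_gt0 hH expn_gt0.
pose F := @tr n @: [set f | maj f] :|: @cs n @: [set: 'I_n].
have cardF : #|F| = H + n.
  rewrite cardsU card_imset; last first.
    move=> f g e; apply/ffunP => i; have := congr1 (fun A : {set claw_vertex n} => claw_a i \in A) e.
    by rewrite !inE.
  rewrite card_imset; last first.
    move=> j k e; apply/eqP; have := congr1 (fun A : {set claw_vertex n} => claw_a j \in A) e.
    by rewrite !inE /= eqxx /= => /esym/negbFE.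
  rewrite cardsT card_ord.
  have -> : @tr n @: [set f | maj f] :&: @cs n @: [set: 'I_n] = set0.
    apply/setP => X; rewrite !inE; apply/negP => /andP [/imsetP [f _ ->] /imsetP [j _ e]].
    by have := congr1 (fun A : {set claw_vertex n} => claw_root \in A) e; rewrite !inE.
  by rewrite cards0 subn0.
have famF : family_of_r_indep (@claw_adj n) n F.
  apply/forallP => X; apply/implyP; rewrite inE => /orP [/imsetP [f _ ->] | /imsetP [j _ ->]].
    exact: tr_indep.
  exact: cs_indep.
have mm : forall f g, maj f -> maj g -> exists k, f k && g k.
  move=> f g; rewrite /maj; case f0: (f i0); case f1: (f i1); case f2: (f i2);
  case g0: (g i0); case g1: (g i1); case g2: (g i2) => /= hf hg;
  first [by exists i0; rewrite f0 g0 | by exists i1; rewrite f1 g1 | by exists i2; rewrite f2 g2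
        | discriminate hf | discriminate hg].
have mc : forall f j, maj f -> exists k, f k && (k != j).
  move=> f j; rewrite /maj => hm; case: (eqVneq i0 j) => [<-|n0].
    case f1: (f i1); first by exists i1; rewrite f1.
    case f2: (f i2); first by exists i2; rewrite f2.
    by move: hm; rewrite f1 f2 !andbF.
  case: (eqVneq i1 j) => [<-|n1].
    case f0: (f i0); first by exists i0; rewrite f0.
    case f2: (f i2); first by exists i2; rewrite f2.
    by move: hm; rewrite f0 f2 !andbF.
  case f0: (f i0); first by exists i0; rewrite f0 n0.
  case f1: (f i1); first by exists i1; rewrite f1 n1.
  by move: hm; rewrite f0 f1.
have intF : intersecting F.
  apply/forallP => X; apply/implyP; rewrite inE => /orP [/imsetP [f hf ->] | /imsetP [j _ ->]];
  apply/forallP => Y; apply/implyP; rewrite inE => /orP [/imsetP [g hg ->] | /imsetP [k _ ->]].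
  - rewrite inE in hf; rewrite inE in hg; have [k hk] := mm f g hf hg.
    by apply: (@meet _ _ _ (claw_a k)); rewrite inE; case/andP: hk.
  - rewrite inE in hf; have [l hl] := mc f k hf.
    by apply: (@meet _ _ _ (claw_a l)); rewrite inE; case/andP: hl.
  - rewrite inE in hg; have [l hl] := mc g j hg.
    by apply: (@meet _ _ _ (claw_a l)); rewrite inE; case/andP: hl.
  - by apply: (@meet _ _ _ claw_root); rewrite inE.
have h1 : #|F| <= max_intersecting (@claw_adj n) n.
  by apply: (@leq_bigmax_cond _ _ _ F) => //; rewrite famF intF.
have h2 : max_star (@claw_adj n) n < H + n.
  have hn0 : 0 < n by apply: ltnW (ltnW hn).
  apply: (@leq_ltn_trans (H + n.-1)); last by rewrite ltn_add2l ltn_predL.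
  apply/bigmax_leqP => v _; apply: leq_trans (star_bound v) _.
  case: v => [[]|[i|i]].
  - rewrite (_ : [set f : {ffun 'I_n -> bool} | _ \in @tr n f] = set0); last by apply/setP => f; rewrite !inE.
    rewrite cards0 add0n; apply: leq_trans (max_card _) _; rewrite card_ord; lia.
  - rewrite (_ : [set f : {ffun 'I_n -> bool} | _ \in @tr n f] = [set f : {ffun 'I_n -> bool} | ~~ f i]); last by apply/setP => f; rewrite !inE.
    rewrite (_ : [set j : 'I_n | _ \in @cs n j] = set0); last by apply/setP => f; rewrite !inE.
    rewrite hFn cards0; lia.
  - rewrite (_ : [set f : {ffun 'I_n -> bool} | _ \in @tr n f] = [set f : {ffun 'I_n -> bool} | f i]); last by apply/setP => f; rewrite !inE.
    rewrite (_ : [set j : 'I_n | _ \in @cs n j] = [set~ i]); last by apply/setP => j; rewrite !inE eq_sym.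
    by rewrite hF cardsC1 card_ord.
rewrite /r_EKR => e.
by move: (leq_ltn_trans h1 (leq_ltn_trans (eq_leq e) h2)); rewrite cardF ltnn.
Qed.
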